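(* Let $(\mathfrak g,[\cdot,\cdot],\alpha,\varepsilon)$ be a color Hom-Lie algebra and $\rho$ a representation of $\mathfrak g$ on $(M,\beta)$. Let $\delta^1:\mathscr C^1(\mathfrak g,M)\to\mathscr C^2(\mathfrak g,M)$ and $\delta^2:\mathscr C^2(\mathfrak g,M)\to\mathscr C^3(\mathfrak g,M)$ be defined, for homogeneous $\varphi$ and homogeneous $x_0,x_1,x_2\in\mathfrak g$, by $\delta^1\varphi(x_0,x_1)=\varepsilon(\varphi,x_0)\rho(x_0)(\varphi(x_1))-\varepsilon(\varphi+x_0,x_1)\rho(x_1)(\varphi(x_0))-\varphi([x_0,x_1])$, $\delta^2\varphi(x_0,x_1,x_2)=\varepsilon(\varphi,x_0)\rho(\alpha(x_0))(\varphi(x_1,x_2))-\varepsilon(\varphi+x_0,x_1)\rho(\alpha(x_1))(\varphi(x_0,x_2))+\varepsilon(\varphi+x_0+x_1,x_2)\rho(\alpha(x_2))(\varphi(x_0,x_1))-\varphi([x_0,x_1],\alpha(x_2))+\varepsilon(x_1,x_2)\varphi([x_0,x_2],\alpha(x_1))+\varphi(\alpha(x_0),[x_1,x_2])$. Then $\delta^2\circ\delta^1=0$.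
   Context: $\mathbb K$ is a field of characteristic zero and $\Gamma$ an abelian group. A bicharacter is a map $\varepsilon:\Gamma\times\Gamma\to\mathbb K\setminus\{0\}$ with $\varepsilon(a,b)\varepsilon(b,a)=1$, $\varepsilon(a,b+c)=\varepsilon(a,b)\varepsilon(a,c)$, $\varepsilon(a+b,c)=\varepsilon(a,c)\varepsilon(b,c)$; for homogeneous objects $\varepsilon(x,y)=\varepsilon(\deg x,\deg y)$. A color Hom-Lie algebra $(\mathfrak g,[\cdot,\cdot],\alpha,\varepsilon)$: $\Gamma$-graded space, even bilinear bracket, even linear $\alpha$, with $[x,y]=-\varepsilon(x,y)[y,x]$ and $\varepsilon(z,x)[\alpha(x),[y,z]]+\varepsilon(x,y)[\alpha(y),[z,x]]+\varepsilon(y,z)[\alpha(z),[x,y]]=0$. A representation of $\mathfrak g$ on $(M,\beta)$ ($M$ $\Gamma$-graded, $\beta:M\to M$ even linear) is an even linear $\rho:\mathfrak g\to\mathfrak{gl}(M)$ with $\rho([x,y])\circ\beta=\rho(\alpha(x))\circ\rho(y)-\varepsilon(x,y)\rho(\alpha(y))\circ\rho(x)$. For $n\ge1$, $\mathscr C^n(\mathfrak g,M)$ is the graded space of $\varepsilon$-alternating multilinear maps $\varphi:\wedge^n\mathfrak g\to M$ (sums of homogeneous ones) satisfying $\varphi\circ\alpha^{\otimes n}=\beta\circ\varphi$. *)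

(* Defs.v *)
From HB Require Import structures.
From mathcomp Require Import all_boot all_algebra.
Set Implicit Arguments. Unset Strict Implicit. Unset Printing Implicit Defensive.
Import GRing.Theory.
Local Open Scope ring_scope.

Section ColorHomLie.
Variables (K : fieldType) (G : zmodType).

Definition lin_map (U V : lmodType K) (f : U -> V) : Prop :=
  forall (k : K) (x y : U), f (k *: x + y) = k *: f x + f y.

(* A G-grading of V: V is the direct sum of the images of the
   (linear) projections gproj a, a : G. *)
Record grading (V : lmodType K) := Grading {
  gproj : G -> V -> V;
  gproj_lin : forall a, lin_map (gproj a);
  gproj_gproj : forall a b x,
      gproj a (gproj b x) = if a == b then gproj b x else 0;
  gproj_decomp : forall x, exists s : seq G,
      uniq s /\ x = \sum_(a <- s) gproj a x }.

Definition homog (V : lmodType K) (gr : grading V) (a : G) (x : V) : Prop :=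
  gproj gr a x = x.

Definition even_map (V W : lmodType K) (gV : grading V) (gW : grading W)
  (f : V -> W) : Prop :=
  forall a x, homog gV a x -> homog gW a (f x).

Definition bicharacter (eps : G -> G -> K) : Prop :=
  [/\ (forall a b, eps a b != 0),
      (forall a b, eps a b * eps b a = 1),
      (forall a b c, eps a (b + c) = eps a b * eps a c) &
      (forall a b c, eps (a + b) c = eps a c * eps b c)].

Definition is_colorHomLie (g : lmodType K) (gr : grading g)
  (br : g -> g -> g) (al : g -> g) (eps : G -> G -> K) : Prop :=
  bicharacter eps
  /\ (forall x, lin_map (br x)) /\ (forall y, lin_map (fun x => br x y))
  /\ (forall a b x y, homog gr a x -> homog gr b y -> homog gr (a + b) (br x y))
  /\ lin_map al /\ even_map gr gr al
  /\ (forall a b x y, homog gr a x -> homog gr b y ->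
         br x y = - (eps a b *: br y x))
  /\ (forall a b c x y z, homog gr a x -> homog gr b y -> homog gr c z ->
         eps c a *: br (al x) (br y z) + eps a b *: br (al y) (br z x)
         + eps b c *: br (al z) (br x y) = 0).

Definition is_rep (g : lmodType K) (gr : grading g)
  (br : g -> g -> g) (al : g -> g) (eps : G -> G -> K)
  (M : lmodType K) (grM : grading M) (beta : M -> M) (rho : g -> M -> M) : Prop :=
  [/\ lin_map beta /\ even_map grM grM beta,
      (forall (k : K) x y m, rho (k *: x + y) m = k *: rho x m + rho y m),
      (forall x, lin_map (rho x)),
      (forall a b x m, homog gr a x -> homog grM b m -> homog grM (a + b) (rho x m)) &
      (forall a b x y m, homog gr a x -> homog gr b y ->
         rho (br x y) (beta m) = rho (al x) (rho y m) - eps a b *: rho (al y) (rho x m))].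

Definition is_homog_cochain1 (g : lmodType K) (gr : grading g) (al : g -> g)
  (M : lmodType K) (grM : grading M) (beta : M -> M) (d : G) (phi : g -> M) : Prop :=
  [/\ lin_map phi,
      (forall a x, homog gr a x -> homog grM (d + a) (phi x)) &
      (forall x, phi (al x) = beta (phi x))].

Variables (g : lmodType K) (br : g -> g -> g) (al : g -> g) (eps : G -> G -> K)
  (M : lmodType K) (rho : g -> M -> M).

(* delta^1 phi (x0, x1), for phi homogeneous of degree d and x_i homogeneous
   of degree a_i (degrees passed explicitly). *)
Definition delta1 (phi : g -> M) (d : G) (x0 : g) (a0 : G) (x1 : g) (a1 : G) : M :=
  eps d a0 *: rho x0 (phi x1) - eps (d + a0) a1 *: rho x1 (phi x0) - phi (br x0 x1).

(* delta^2 psi (x0, x1, x2), for psi homogeneous of degree e, given as a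
   degree-annotated function evaluated on homogeneous arguments. *)
Definition delta2 (psi : g -> G -> g -> G -> M) (e : G)
  (x0 : g) (a0 : G) (x1 : g) (a1 : G) (x2 : g) (a2 : G) : M :=
  eps e a0 *: rho (al x0) (psi x1 a1 x2 a2)
  - eps (e + a0) a1 *: rho (al x1) (psi x0 a0 x2 a2)
  + eps (e + a0 + a1) a2 *: rho (al x2) (psi x0 a0 x1 a1)
  - psi (br x0 x1) (a0 + a1) (al x2) a2
  + eps a1 a2 *: psi (br x0 x2) (a0 + a2) (al x1) a1
  + psi (al x0) a0 (br x1 x2) (a1 + a2).

End ColorHomLie.

(* Main.v *)
Require Import Defs.
From HB Require Import structures.
From mathcomp Require Import all_boot all_algebra.
From mathcomp Require Import ring.
Import GRing.Theory.
Local Open Scope ring_scope.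
Set Implicit Arguments. Unset Strict Implicit.

Section Lin.
Variables (K : fieldType) (U V : lmodType K) (f : U -> V) (Hf : lin_map f).
Lemma lin0 : f 0 = 0.
Proof. have h := Hf 1 0 0. rewrite !scale1r addr0 in h.
by apply: (@addrI _ (f 0)); rewrite addr0 -h. Qed.
Lemma linD x y : f (x + y) = f x + f y.
Proof. by have := Hf 1 x y; rewrite !scale1r. Qed.
Lemma linZ k x : f (k *: x) = k *: f x.
Proof. by rewrite -[k *: x]addr0 Hf lin0 addr0. Qed.
Lemma linN x : f (- x) = - f x.
Proof. by rewrite -scaleN1r linZ scaleN1r. Qed.
End Lin.

Section Coll.
Variables (K : fieldType) (M : lmodType K) (v : nat -> M).
Definition LL (c : nat -> K) : M := \sum_(i < 11) c i *: v i.
Lemma LLD c c' : LL c + LL c' = LL (fun i => c i + c' i).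
Proof. by rewrite /LL -big_split /=; apply: eq_bigr => i _; rewrite scalerDl. Qed.
Lemma LLN c : - LL c = LL (fun i => - c i).
Proof. by rewrite /LL -sumrN; apply: eq_bigr => i _; rewrite scaleNr. Qed.
Lemma LLZ k c : k *: LL c = LL (fun i => k * c i).
Proof. by rewrite /LL scaler_sumr; apply: eq_bigr => i _; rewrite scalerA. Qed.
Lemma LLe (k : 'I_11) : v k = LL (fun i => (i == k)%:R).
Proof.
rewrite /LL (bigD1 k) //= eqxx scale1r big1 ?addr0 // => i ne.
by rewrite (_ : (i == k :> nat) = false) ?scale0r //; exact/negbTE.
Qed.
Lemma LL0 c : (forall i, (i < 11)%N -> c i = 0) -> LL c = 0.
Proof. by move=> h; rewrite /LL big1 // => i _; rewrite h ?scale0r. Qed.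
End Coll.
Theorem mainTheorem9 (K : fieldType) (G : zmodType)
  (charK0 : [pchar K] =i pred0)
  (g : lmodType K) (gr : grading G g) (br : g -> g -> g) (al : g -> g)
  (eps : G -> G -> K)
  (Hg : is_colorHomLie gr br al eps)
  (M : lmodType K) (grM : grading G M) (beta : M -> M) (rho : g -> M -> M)
  (Hrho : is_rep gr br al eps grM beta rho)
  (d : G) (phi : g -> M)
  (Hphi : is_homog_cochain1 gr al grM beta d phi)
  (x0 x1 x2 : g) (a0 a1 a2 : G)
  (H0 : homog gr a0 x0) (H1 : homog gr a1 x1) (H2 : homog gr a2 x2) :
  delta2 br al eps rho (delta1 br eps rho phi d) d x0 a0 x1 a1 x2 a2 = 0.
Proof.
case: Hg => [[enz einv eDr eDl] [brl [brl2 [breven [allin [aleven [skew jac]]]]]]].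
case: Hrho => [[blin beven] rlin1 rlin rhoeven rrep].
case: Hphi => [plin pdeg pcomm].
have hA0 := aleven _ _ H0; have hA1 := aleven _ _ H1; have hA2 := aleven _ _ H2.
set J0 := br (al x0) (br x1 x2).
set J1 := br (al x1) (br x2 x0).
set J2 := br (al x2) (br x0 x1).
have hJ2 : br (br x0 x1) (al x2) = - (eps (a0 + a1) a2 *: J2).
  by rewrite (skew _ _ _ _ (breven _ _ _ _ H0 H1) hA2).
have hJ1 : br (br x0 x2) (al x1) = (eps (a0 + a2) a1 * eps a0 a2) *: J1.
  rewrite (skew _ _ _ _ (breven _ _ _ _ H0 H2) hA1) (skew _ _ _ _ H0 H2).
  by rewrite (linN (brl _)) (linZ (brl _)) scalerN opprK scalerA.
have hJ0 : J0 = - ((eps a2 a0)^-1 * eps a0 a1) *: J1 - ((eps a2 a0)^-1 * eps a1 a2) *: J2.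
  have := jac _ _ _ _ _ _ H0 H1 H2; rewrite -/J0 -/J1 -/J2 => h.
  have -> : J0 = (eps a2 a0)^-1 *: (eps a2 a0 *: J0).
    by rewrite scalerA mulVf ?scale1r.
  rewrite -addrA in h; move/eqP: h; rewrite addr_eq0 => /eqP ->.
  by rewrite scalerN scalerDr !scalerA opprD !scaleNr.
rewrite /delta2 /delta1 hJ2 hJ1 -/J0 hJ0 !pcomm.
rewrite (rrep _ _ _ _ _ H0 H1) (rrep _ _ _ _ _ H0 H2) (rrep _ _ _ _ _ H1 H2).
rewrite !(linD (rlin _), linN (rlin _), linZ (rlin _)).
rewrite !(linD plin, linN plin, linZ plin).
pose v := fun i : nat => nth 0 [:: rho (al x0) (rho x1 (phi x2)); rho (al x0) (rho x2 (phi x1));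
  rho (al x1) (rho x0 (phi x2)); rho (al x1) (rho x2 (phi x0));
  rho (al x2) (rho x0 (phi x1)); rho (al x2) (rho x1 (phi x0));
  rho (al x0) (phi (br x1 x2)); rho (al x1) (phi (br x0 x2));
  rho (al x2) (phi (br x0 x1)); phi J1; phi J2] i.
rewrite [rho (al x0) (rho x1 (phi x2))](LLe v (@Ordinal 11 0 isT)).
rewrite [rho (al x0) (rho x2 (phi x1))](LLe v (@Ordinal 11 1 isT)).
rewrite [rho (al x1) (rho x0 (phi x2))](LLe v (@Ordinal 11 2 isT)).
rewrite [rho (al x1) (rho x2 (phi x0))](LLe v (@Ordinal 11 3 isT)).
rewrite [rho (al x2) (rho x0 (phi x1))](LLe v (@Ordinal 11 4 isT)).
rewrite [rho (al x2) (rho x1 (phi x0))](LLe v (@Ordinal 11 5 isT)).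
rewrite [rho (al x0) (phi (br x1 x2))](LLe v (@Ordinal 11 6 isT)).
rewrite [rho (al x1) (phi (br x0 x2))](LLe v (@Ordinal 11 7 isT)).
rewrite [rho (al x2) (phi (br x0 x1))](LLe v (@Ordinal 11 8 isT)).
rewrite [phi J1](LLe v (@Ordinal 11 9 isT)).
rewrite [phi J2](LLe v (@Ordinal 11 10 isT)).
rewrite !(LLZ, LLN, LLD).
apply: LL0 => i Hi.
have e10 : eps a1 a0 = (eps a0 a1)^-1 by apply: (mulfI (enz a0 a1)); rewrite einv divff.
have e20 : eps a2 a0 = (eps a0 a2)^-1 by apply: (mulfI (enz a0 a2)); rewrite einv divff.
have e21 : eps a2 a1 = (eps a1 a2)^-1 by apply: (mulfI (enz a1 a2)); rewrite einv divff.
have n01 := enz a0 a1; have n02 := enz a0 a2; have n12 := enz a1 a2.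
do 11?[case: i Hi => [|i] Hi]; rewrite //= ?eDr ?eDl ?e10 ?e20 ?e21 ?invrK;
  try field => //.
Qed.
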